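(* Let $p=(z_0,\tau_0,Y_0)\in Son'$ with $z_0\neq0$ and $Y_0\neq0$, and suppose the Hugoniot$'$ curve $\mathcal{H}'(p)$ meets $\mathcal{C}$ in two distinct points $q_1,q_2$. Then $\sigma(p)$ lies strictly between $\sigma(q_1)$ and $\sigma(q_2)$ if and only if $(b_1+1)z_0^2<1$.
   Context: Fix real constants $a_1,a_2,a_3,a_4$ and $b_1>1$, and put $c=a_3-a_2>0$. Coordinates $(z,\tau,Y)\in\mathbb{R}^3$. Define $\widetilde U(z,\tau)=\frac{2cz}{z^2+1}+c\tau(z^2-1)$, $V_1(z,\tau)=\frac{c}{z^2+1}+c\tau z$, $U=(\widetilde U-a_1+a_4)/b_1$, $V=V_1-a_3$; the point $(z,\tau,Y)$ has right state $W'=(U-zY/2,\,V-Y/2)$ and shock speed $\sigma(z,\tau,Y)=\frac{c}{b_1}[(b_1+1)z^2-1]\tau+\frac{c}{b_1}\frac{(b_1+2)z}{z^2+1}+\sigma_0$, $\sigma_0=[(b_1+1)a_4-a_1]/b_1$. For $p\in\mathbb{R}^3$, the Hugoniot$'$ curve is $\mathcal{H}'(p)=\{q: W'(q)=W'(p)\}$. Let $\mathcal{C}=\{Y=0\}$ and let $Son'$ be the zero set of $c\,z[(b_1+1)z^2+3]\tau-[(b_1+1)z^2-1]\frac{Y}{2}+\frac{c[(b_1-1)z^2+1]}{z^2+1}$. *)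

(* Defs.v *)
From Stdlib Require Import Reals.
Open Scope R_scope.

Definition pt := (R * R * R)%type.
Definition pz (p : pt) : R := fst (fst p).
Definition ptau (p : pt) : R := snd (fst p).
Definition pY (p : pt) : R := snd p.

Section Model.
Variables a1 a2 a3 a4 b1 : R.

Definition cc : R := a3 - a2.

Definition Utilde (z tau : R) : R := 2 * cc * z / (z ^ 2 + 1) + cc * tau * (z ^ 2 - 1).
Definition V1 (z tau : R) : R := cc / (z ^ 2 + 1) + cc * tau * z.
Definition UU (z tau : R) : R := (Utilde z tau - a1 + a4) / b1.
Definition VV (z tau : R) : R := V1 z tau - a3.

Definition Wp (p : pt) : R * R :=
  (UU (pz p) (ptau p) - pz p * pY p / 2, VV (pz p) (ptau p) - pY p / 2).

Definition sigma0 : R := ((b1 + 1) * a4 - a1) / b1.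

Definition shock_speed (p : pt) : R :=
  cc / b1 * ((b1 + 1) * pz p ^ 2 - 1) * ptau p
  + cc / b1 * ((b1 + 2) * pz p / (pz p ^ 2 + 1)) + sigma0.

Definition Hugoniot' (p q : pt) : Prop := Wp q = Wp p.

Definition inC (q : pt) : Prop := pY q = 0.

Definition Son' (p : pt) : Prop :=
  let z := pz p in let tau := ptau p in let Y := pY p in
  cc * z * ((b1 + 1) * z ^ 2 + 3) * tau - ((b1 + 1) * z ^ 2 - 1) * (Y / 2)
  + cc * ((b1 - 1) * z ^ 2 + 1) / (z ^ 2 + 1) = 0.

End Model.

(* Main.v *)
Require Import Defs.
From Stdlib Require Import Reals Lra Psatz.
Open Scope R_scope.

Lemma s_pos (z : R) : z ^ 2 + 1 <> 0.
Proof. nra. Qed.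

Lemma id_c (a2 a3 z t : R) :
  z * Utilde a2 a3 z t - (z ^ 2 - 1) * V1 a2 a3 z t = cc a2 a3.
Proof. unfold Utilde, V1. field. apply s_pos. Qed.

Lemma id_tau (a2 a3 z t : R) :
  cc a2 a3 * t = z * V1 a2 a3 z t - Utilde a2 a3 z t + cc a2 a3 * z / (z ^ 2 + 1).
Proof. unfold Utilde, V1. field. apply s_pos. Qed.

Lemma id_sigma (a1 a2 a3 a4 b1 : R) (q : pt) : b1 <> 0 ->
  shock_speed a1 a2 a3 a4 b1 q =
  pz q * V1 a2 a3 (pz q) (ptau q) + Utilde a2 a3 (pz q) (ptau q) / b1 + sigma0 a1 a4 b1.
Proof. intros. unfold shock_speed, Utilde, V1. field. split; auto. apply s_pos. Qed.

Lemma on_curve (a1 a2 a3 a4 b1 : R) (p q : pt) : b1 <> 0 ->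
  Hugoniot' a1 a2 a3 a4 b1 p q -> inC q ->
  Utilde a2 a3 (pz q) (ptau q) = Utilde a2 a3 (pz p) (ptau p) - b1 * pz p * pY p / 2 /\
  V1 a2 a3 (pz q) (ptau q) = V1 a2 a3 (pz p) (ptau p) - pY p / 2.
Proof.
  intros hb H C. unfold Hugoniot', Wp, inC in *. rewrite C in H.
  injection H; intros E2 E1. unfold UU, VV in *. split.
  - apply (Rmult_eq_reg_r (/ b1)); [|apply Rinv_neq_0_compat; auto].
    replace ((Utilde a2 a3 (pz q) (ptau q)) * / b1) with
      ((Utilde a2 a3 (pz q) (ptau q) - a1 + a4) / b1 - pz q * 0 / 2 + (a1 - a4)/b1) by (field; auto).
    rewrite E1. field. auto.
  - lra.
Qed.

Theorem mainTheorem12 (a1 a2 a3 a4 b1 : R) (p q1 q2 : pt) :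
  1 < b1 ->
  0 < cc a2 a3 ->
  Son' a2 a3 b1 p ->
  pz p <> 0 ->
  pY p <> 0 ->
  q1 <> q2 ->
  (forall q : pt,
     (Hugoniot' a1 a2 a3 a4 b1 p q /\ inC q) <-> (q = q1 \/ q = q2)) ->
  ((shock_speed a1 a2 a3 a4 b1 q1 < shock_speed a1 a2 a3 a4 b1 p < shock_speed a1 a2 a3 a4 b1 q2 \/
    shock_speed a1 a2 a3 a4 b1 q2 < shock_speed a1 a2 a3 a4 b1 p < shock_speed a1 a2 a3 a4 b1 q1)
   <-> (b1 + 1) * pz p ^ 2 < 1).
Proof.
  intros hb hc hS hz hY hne Hq.
  assert (hb0 : b1 <> 0) by lra.
  destruct (proj2 (Hq q1) (or_introl eq_refl)) as [H1 C1].
  destruct (proj2 (Hq q2) (or_intror eq_refl)) as [H2 C2].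
  destruct (on_curve _ _ _ _ _ _ _ hb0 H1 C1) as [U1 W1].
  destruct (on_curve _ _ _ _ _ _ _ hb0 H2 C2) as [U2 W2].
  rewrite !(id_sigma a1 a2 a3 a4 b1 _ hb0).
  set (c := cc a2 a3) in *.
  set (z0 := pz p) in *. set (Y0 := pY p) in *.
  set (U0 := Utilde a2 a3 z0 (ptau p)) in *.
  set (V0 := V1 a2 a3 z0 (ptau p)) in *.
  set (A := U0 - b1 * z0 * Y0 / 2) in *.
  set (B := V0 - Y0 / 2) in *.
  set (z1 := pz q1) in *. set (z2 := pz q2) in *.
  assert (f1 : B * z1 ^ 2 - A * z1 + c - B = 0).
  { pose proof (id_c a2 a3 z1 (ptau q1)) as E. rewrite U1, W1 in E. fold c in E. nra. }
  assert (f2 : B * z2 ^ 2 - A * z2 + c - B = 0).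
  { pose proof (id_c a2 a3 z2 (ptau q2)) as E. rewrite U2, W2 in E. fold c in E. nra. }
  assert (hz12 : z1 <> z2).
  { intro E. apply hne.
    pose proof (id_tau a2 a3 z1 (ptau q1)) as T1.
    pose proof (id_tau a2 a3 z2 (ptau q2)) as T2.
    rewrite U1, W1 in T1. rewrite U2, W2 in T2. fold c in T1, T2.
    rewrite <- E in T2.
    assert (Et : ptau q1 = ptau q2).
    { apply (Rmult_eq_reg_l c); [lra | lra]. }
    unfold inC in C1, C2.
    destruct q1 as [[x1 t1] y1]; destruct q2 as [[x2 t2] y2].
    unfold pz, ptau, pY in *; simpl in *. subst z1 z2. subst. reflexivity. }
  assert (vs : B * (z1 + z2) = A).
  { apply (Rmult_eq_reg_l (z1 - z2)); [|lra]. nra. }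
  assert (vp : B * (z1 * z2) = c - B) by nra.
  assert (Qe : (z0 * (V0 + Y0/2) - z1 * B) * (z0 * (V0 + Y0/2) - z2 * B)
               = Y0 ^ 2 * ((b1 + 1) * z0 ^ 2 - 1) / 2).
  { transitivity (z0^2 * (V0 + Y0/2)^2 - z0 * (V0 + Y0/2) * A + B * (c - B)).
    { rewrite <- vs, <- vp. ring. }
    unfold Son' in hS. fold z0 Y0 c in hS.
    set (t0 := ptau p) in *.
    transitivity (z0^2 * (V0 + Y0/2)^2 - z0 * (V0 + Y0/2) * A + B * (c - B)
       - Y0 / 2 * (c * z0 * ((b1 + 1) * z0 ^ 2 + 3) * t0 - ((b1 + 1) * z0 ^ 2 - 1) * (Y0 / 2) +
      c * ((b1 - 1) * z0 ^ 2 + 1) / (z0 ^ 2 + 1))).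
    { rewrite hS. ring. }
    subst A B U0 V0. unfold Utilde, V1. fold c. field. apply s_pos. }
  assert (D1 : z0 * V0 + U0 / b1 + sigma0 a1 a4 b1 - (z1 * B + A / b1 + sigma0 a1 a4 b1)
               = z0 * (V0 + Y0/2) - z1 * B) by (subst A B; field; auto).
  assert (D2 : z0 * V0 + U0 / b1 + sigma0 a1 a4 b1 - (z2 * B + A / b1 + sigma0 a1 a4 b1)
               = z0 * (V0 + Y0/2) - z2 * B) by (subst A B; field; auto).
  rewrite U1, W1, U2, W2. fold A B.
  set (sp := z0 * V0 + U0 / b1 + sigma0 a1 a4 b1) in *.
  set (s1 := z1 * B + A / b1 + sigma0 a1 a4 b1) in *.
  set (s2 := z2 * B + A / b1 + sigma0 a1 a4 b1) in *.
  assert (P : (sp - s1) * (sp - s2) = Y0 ^ 2 * ((b1 + 1) * z0 ^ 2 - 1) / 2)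
    by (rewrite D1, D2; exact Qe).
  assert (hY2 : 0 < Y0 ^ 2) by (assert (Y0 * Y0 > 0) by (apply Rsqr_pos_lt; auto); nra).
  split.
  - intros [[a b]|[a b]]; nra.
  - intro h. assert ((sp - s1) * (sp - s2) < 0) by nra.
    destruct (Rlt_or_le sp s1) as [l|l].
    + right. split; auto. destruct (Rlt_or_le s2 sp); auto.
      assert (0 <= (sp - s1) * (sp - s2)) by (replace ((sp - s1) * (sp - s2)) with ((s1 - sp) * (s2 - sp)) by ring; apply Rmult_le_pos; lra). lra.
    + left. destruct (Rle_lt_or_eq_dec _ _ l) as [l'|l'].
      * split; auto. destruct (Rlt_or_le sp s2); auto.
        assert (0 <= (sp - s1) * (sp - s2)) by (apply Rmult_le_pos; lra). lra.
      * subst. rewrite l' in H. lra.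
Qed.
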